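(* Let $s\ge1$ be an integer, $\Sigma_*=\{-s,\dots,-1,1,\dots,s\}$, and for $n\ge0$ let $T_n\subseteq\Sigma_*^n$ be the set of strings $t_1\cdots t_n$ such that there is no index $j$ with $t_j=m\in\{1,\dots,s\}$ and $t_{j+1}=-m$ (with $T_0$ consisting of the empty string). Then $|T_0|=1$, $|T_1|=2s$, and $|T_{n+2}|=2s|T_{n+1}|-s|T_n|$ for all $n\ge0$. Moreover, for $s\ge2$, $$|T_n|=\frac{s^n}{2\sqrt{1-1/s}}\left\{\left(1+\sqrt{1-1/s}\right)^{n+1}-\left(1-\sqrt{1-1/s}\right)^{n+1}\right\},$$ and asymptotically $|T_n|\approx\frac{1+\sqrt{1-1/s}}{2\sqrt{1-1/s}}\left[s\left(1+\sqrt{1-1/s}\right)\right]^n$, in the sense that the ratio of the two sides tends to $1$ as $n\to\infty$. *)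

(* Defs.v *)
From HB Require Import structures.
From mathcomp Require Import all_boot all_order all_algebra.
From mathcomp Require Import all_classical all_reals all_analysis.
Set Implicit Arguments. Unset Strict Implicit. Unset Printing Implicit Defensive.
Import Order.TTheory GRing.Theory Num.Theory.
Local Open Scope ring_scope.

(* The alphabet Sigma_* = {-s,...,-1,1,...,s}, encoded as the finite type
   'I_s * bool : (i, true) stands for the letter i+1, (i, false) for -(i+1). *)
Definition Sig (s : nat) : finType := ('I_s * bool)%type.

Definition letter (s : nat) (a : Sig s) : int :=
  if a.2 then (a.1.+1)%:Z else - (a.1.+1)%:Z.

Definition good (w : seq int) : bool :=
  ~~ has (fun j => (0 < nth 0 w j) && (nth 0 w j.+1 == - nth 0 w j))
         (iota 0 (size w).-1).

Definition T (s n : nat) : {set n.-tuple (Sig s)} :=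
  [set t : n.-tuple (Sig s) | good (map (@letter s) t)].

Definition Tcard (s n : nat) : nat := #|T s n|.

(* Main.v *)
Require Import Defs.
From HB Require Import structures.
From mathcomp Require Import all_boot all_order all_algebra.
From mathcomp Require Import all_classical all_reals all_analysis.
From mathcomp Require Import zify ring lra.
Import Order.TTheory GRing.Theory Num.Theory.
Local Open Scope ring_scope.

Lemma good_cons (x : int) w : good (x :: w) = good w && ~~ ((0 < x) && (nth 0 w 0 == - x)).
Proof.
case: w => [|y w].
  rewrite /good /=; case: (ltrgt0P x) => // hx; rewrite eq_sym oppr_eq0; by case: eqP hx => // ->; rewrite ltxx.
rewrite /good /=.
have -> : iota 1%N (size w) = map S (iota 0 (size w)) by rewrite -(iotaDl 1).
by rewrite has_map negb_or andbC.
Qed.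

Section S.
Variable s : nat.
Local Notation W t := (map (@letter s) (tval t)).
Definition G n := (\sum_(t : n.-tuple (Sig s)) (good (W t) : nat))%N.
Definition N n := (\sum_(t : n.-tuple (Sig s)) (good (W t) && (nth 0%R (W t) 0 < 0)%R) : nat)%N.

Lemma Tcard_G n : Tcard s n = G n.
Proof.
rewrite /Tcard /T -sum1_card big_mkcond /=; apply: eq_bigr => t _; rewrite inE; by case: good.
Qed.

Lemma sum_cons (T : finType) n (F : n.+1.-tuple T -> nat) :
  (\sum_(t : n.+1.-tuple T) F t = \sum_(x : T) \sum_(w : n.-tuple T) F [tuple of x :: w])%N.
Proof.
rewrite pair_bigA /= (reindex (fun p : T * n.-tuple T => [tuple of p.1 :: p.2])) //.
exists (fun t => (thead t, [tuple of behead t])).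
  by move=> [x w] _ /=; rewrite theadE; congr pair; apply: val_inj.
by move=> t _ /=; rewrite [RHS]tuple_eta.
Qed.

Lemma letter_pos (a : Sig s) : (0 < letter a) = a.2.
Proof. by case: a => i [] /=; rewrite /letter /=; lia. Qed.
Lemma letter_neg (a : Sig s) : (letter a < 0) = ~~ a.2.
Proof. by case: a => i [] /=; rewrite /letter /=; lia. Qed.

Lemma sum_sig (F : Sig s -> nat) : (\sum_(x : Sig s) F x = \sum_(i < s) (F (i, true) + F (i, false)))%N.
Proof.
rewrite (eq_bigr (fun p : Sig s => F (p.1, p.2))); last by case.
rewrite -(pair_bigA _ (fun i b => F (i, b))) /=.
under eq_bigr => i _ do rewrite big_bool. by [].
Qed.

Lemma sum_c (y : Sig s) :
  (\sum_(x : Sig s) (((0 < letter x) && (letter y == - letter x))%R : nat))%N = ((letter y < 0)%R : nat).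
Proof.
rewrite sum_sig letter_neg.
under eq_bigr => i _ do rewrite !letter_pos /= addn0.
case: y => j [] /=.
  rewrite big1 // => i _; rewrite /letter /=; apply/eqP; lia.
rewrite (bigD1 j) //= big1 ?addn0.
  by rewrite /letter /= eqxx.
move=> i hij; rewrite /letter /=; case: eqP => // h.
move: hij; suff -> : i = j by rewrite eqxx.
apply: val_inj => /=; lia.
Qed.

Lemma sum_c' (w : seq (Sig s)) :
  (\sum_(x : Sig s) (((0 < letter x) && (nth 0 (map (@letter s) w) 0 == - letter x))%R : nat))%N
   = ((nth 0 (map (@letter s) w) 0 < 0)%R : nat).
Proof.
case: w => [|y w] /=; last exact: sum_c.
rewrite big1 // => x _; rewrite eq_sym oppr_eq0; case: (ltrgt0P (letter x)) => //= ->.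
Qed.

Lemma rec1 n : (G n.+1 + N n = 2 * s * G n)%N.
Proof.
rewrite /G /N sum_cons.
have -> : (2 * s * G n = \sum_(x : Sig s) G n)%N.
  rewrite sum_nat_const (card_prod 'I_s bool) card_ord card_bool; lia.
rewrite /G.
under [X in (_ + X)%N]eq_bigr => t _ do rewrite -mulnb -sum_c' big_distrr /=.
rewrite [X in (_ + X)%N]exchange_big -big_split /=; apply: eq_bigr => x _.
rewrite -big_split /=; apply: eq_bigr => w _.
rewrite good_cons mulnb; case: (good _) => //=; by case: (_ && _).
Qed.

Lemma rec2 n : N n.+1 = (s * G n)%N.
Proof.
rewrite /N /G sum_cons.
under eq_bigr => x _ do under eq_bigr => w _ do rewrite /= good_cons letter_pos letter_neg.
rewrite sum_sig; transitivity (\sum_(i < s) G n)%N; last by rewrite sum_nat_const card_ord.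
apply: eq_bigr => i _ /=; rewrite big1 ?add0n; last by move=> w _; rewrite andbF.
by apply: eq_bigr => w _; rewrite !andbT.
Qed.

End S.

Lemma G0 s : G s 0 = 1%N.
Proof.
rewrite /G (eq_bigr (fun _ => 1%N)) ?sum_nat_const ?card_tuple //.
by move=> t _; rewrite tuple0.
Qed.

Lemma N0 s : N s 0 = 0%N.
Proof. by rewrite /N big1 // => t _; rewrite tuple0. Qed.

Lemma Trec s n : (Tcard s n.+2 + s * Tcard s n = 2 * s * Tcard s n.+1)%N.
Proof. by rewrite !Tcard_G -rec1 rec2. Qed.

Lemma T0 s : Tcard s 0 = 1%N.
Proof. by rewrite Tcard_G G0. Qed.

Lemma T1 s : Tcard s 1 = (2 * s)%N.
Proof. by have := rec1 s 0; rewrite N0 G0 addn0 muln1 -Tcard_G. Qed.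

Lemma pow_rec (R : fieldType) (c x : R) n : x ^+ 2 = 2 * x - c ->
  x ^+ n.+3 = 2 * x ^+ n.+2 - c * x ^+ n.+1.
Proof.
move=> h; rewrite (exprS x n.+2) (exprS x n.+1) mulrA -expr2 h.
ring.
Qed.

Local Open Scope classical_set_scope.

Theorem lemma7 (R : realType) (s : nat) (hs : (1 <= s)%N) :
  [/\ Tcard s 0 = 1%N, Tcard s 1 = (2 * s)%N,
      (forall n : nat,
          (Tcard s n.+2)%:Z = (2 * s)%:Z * (Tcard s n.+1)%:Z - s%:Z * (Tcard s n)%:Z)
    & ((2 <= s)%N ->
       let r : R := Num.sqrt (1 - s%:R^-1) in
       (forall n : nat,
          (Tcard s n)%:R = (s%:R ^+ n / (2 * r)) * ((1 + r) ^+ n.+1 - (1 - r) ^+ n.+1))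
       /\
       ((fun n : nat => (Tcard s n)%:R / ((1 + r) / (2 * r) * (s%:R * (1 + r)) ^+ n))
          @ \oo --> (1 : R^o)))].
Proof.
split.
- exact: T0.
- exact: T1.
- move=> n; have := Trec s n; lia.
move=> hs2 r.
set S : R := s%:R.
have S2 : 2 <= S by rewrite /S (ler_nat R 2 s).
have S0 : 0 < S by apply: lt_le_trans S2.
have Sn0 : S != 0 by rewrite gt_eqF.
have hp : 0 < 1 - S^-1.
  rewrite subr_gt0 invf_lt1 //; apply: lt_le_trans S2; by rewrite ltr1n.
have r0 : 0 < r by rewrite /r sqrtr_gt0.
have rn0 : r != 0 by rewrite gt_eqF.
have r2 : r ^+ 2 = 1 - S^-1 by rewrite /r sqr_sqrtr // ltW.
have r1 : r < 1.
  have : 0 < S^-1 by rewrite invr_gt0.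
  nra.
have ha : (1 + r) ^+ 2 = 2 * (1 + r) - S^-1.
  rewrite sqrrD r2 expr1n; ring.
have hb : (1 - r) ^+ 2 = 2 * (1 - r) - S^-1.
  rewrite sqrrB r2 expr1n; ring.
pose u (n : nat) := S ^+ n / (2 * r) * ((1 + r) ^+ n.+1 - (1 - r) ^+ n.+1).
have hu : forall n, (Tcard s n)%:R = u n /\ (Tcard s n.+1)%:R = u n.+1.
  elim=> [|n [IH1 IH2]].
    rewrite T0 T1 /u; split.
      by rewrite expr0 !expr1; field.
    by rewrite natrM -/S expr1 sqrrD sqrrB; field.
  split; first exact: IH2.
  have := Trec s n; move/(congr1 (fun k : nat => (k%:R : R))).
  rewrite natrD !natrM -/S => E.
  have -> : (Tcard s n.+2)%:R = 2 * S * (Tcard s n.+1)%:R - S * (Tcard s n)%:R.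
    by rewrite -E addrK.
  rewrite IH1 IH2 /u (@pow_rec _ _ _ n ha) (@pow_rec _ _ _ n hb).
  by rewrite !exprS; field; rewrite -/S Sn0 rn0.
have closed : forall n, (Tcard s n)%:R = u n by move=> n; case: (hu n).
split; first exact: closed.
have a0 : 0 < 1 + r by rewrite ltr_wpDr // ltW.
have an0 : 1 + r != 0 by rewrite gt_eqF.
pose q := (1 - r) / (1 + r).
have hq : `|q| < 1.
  rewrite ger0_norm; last by rewrite divr_ge0 // ?subr_ge0 ltW.
  rewrite ltr_pdivrMr // mul1r; lra.
have -> : (fun n : nat => (Tcard s n)%:R / ((1 + r) / (2 * r) * (S * (1 + r)) ^+ n))
   = (fun n => 1 - geometric q q n).
  apply: funext => n; rewrite closed /u /= /q -exprS expr_div_n exprMn.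
  have : (1 + r) ^+ n != 0 by rewrite expf_neq0.
  have : S ^+ n != 0 by rewrite expf_neq0.
  move=> h1 h2; rewrite exprS; field; rewrite ?h1 ?h2 ?an0 ?rn0 ?mulf_neq0 //.
have := cvgB (cvg_cst (1 : R^o)) (cvg_geometric q hq).
rewrite subr0; apply; exact: nbhs_filter.
Qed.
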